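(* Let $\varphi=(\mathfrak{m}_1,\dots,\mathfrak{m}_\ell)$ be a normalizer-adapted decomposition. Fix $1\le p\le\ell_0$ and $1\le i\le\ell$. If there exists $1\le j\le\ell$ with $[pij]>0$, then $[pik]=0$ for every $k\in\{1,\dots,\ell\}\setminus\{j\}$. Consequently $\mathfrak{m}_i\simeq\mathfrak{m}_j$ as $\mathrm{Ad}(\mathsf{H})$-modules and $\mathrm{ad}(V_p)(\mathfrak{m}_i)=\mathfrak{m}_j$.
   Context: $M=\mathsf{G}/\mathsf{H}$ almost-effective, $\mathsf{G},\mathsf{H}$ compact connected; $Q$ an $\mathrm{Ad}(\mathsf{G})$-invariant inner product on $\mathfrak{g}$, $\mathfrak{m}=\mathfrak{h}^{\perp_Q}$, $\mathfrak{m}_0=\{X\in\mathfrak{m}:[\mathfrak{h},X]=0\}$. $\varphi=(\mathfrak{m}_1,\dots,\mathfrak{m}_\ell)$ is an ordered $Q$-orthogonal decomposition of $\mathfrak{m}$ into irreducible $\mathrm{Ad}(\mathsf{H})$-submodules, ordered so that $\mathfrak{m}_0=\mathfrak{m}_1+\dots+\mathfrak{m}_{\ell_0}$ with $\dim\mathfrak{m}_p=1$ for $p\le\ell_0$; $V_p\in\mathfrak{m}_p$ with $Q(V_p,V_p)=1$. $[ijk]=\sum Q([e_\alpha,e_\beta],e_\gamma)^2$ over a $Q$-orthonormal $\varphi$-adapted basis with $e_\alpha\in\mathfrak{m}_i,e_\beta\in\mathfrak{m}_j,e_\gamma\in\mathfrak{m}_k$. $\varphi$ is normalizer-adapted if for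 every $1\le p\le\ell_0$ and $1\le i\le\ell$ with $[\mathfrak{m}_p,\mathfrak{m}_i]\ne\{0\}$ there is $j$ with $[\mathfrak{m}_p,\mathfrak{m}_i]\cap\mathfrak{m}_j\neq\{0\}$. *)

(* Defs.v *)
(* Lie-algebra-level formalization of the setting of
   M = G/H: g = 'rV[R]_n with a Lie bracket br, an
   ad-invariant inner product Q, the isotropy subalgebra h. *)
From HB Require Import structures.
From mathcomp Require Import all_boot all_order all_algebra.
Set Implicit Arguments. Unset Strict Implicit. Unset Printing Implicit Defensive.
Import Order.TTheory GRing.Theory Num.Theory.
Local Open Scope ring_scope.

Section Defs.
Variables (R : realFieldType) (n : nat).
Local Notation V := 'rV[R]_n.
Variable br : V -> V -> V.
Variable Q : V -> V -> R.

Definition is_lie_bracket : Prop :=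
  [/\ (forall (a : R) (x y z : V), br (a *: x + y) z = a *: br x z + br y z),
      (forall x y : V, br x y = - br y x)
    & (forall x y z : V, br x (br y z) + br y (br z x) + br z (br x y) = 0)].

(* Q is an ad(g)-invariant (hence Ad(G)-invariant for connected G) inner product *)
Definition is_ad_invariant_inner_product : Prop :=
  [/\ (forall (a : R) (x y z : V), Q (a *: x + y) z = a * Q x z + Q y z),
      (forall x y : V, Q x y = Q y x),
      (forall x : V, x != 0 -> 0 < Q x x)
    & (forall x y z : V, Q (br x y) z = - Q y (br x z))].

Definition is_subalgebra (h : {vspace V}) : Prop :=
  forall x y, x \in h -> y \in h -> br x y \in h.

Definition is_ideal (I : {vspace V}) : Prop :=
  forall x y, y \in I -> br x y \in I.

Definition almost_effective (h : {vspace V}) : Prop :=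
  forall I : {vspace V}, is_ideal I -> (I <= h)%VS -> I = 0%VS.

Definition in_m (h : {vspace V}) (X : V) : Prop :=
  forall Y, Y \in h -> Q X Y = 0.

(* U is an ad(h)- (i.e. Ad(H)-, H connected) submodule *)
Definition h_invariant (h U : {vspace V}) : Prop :=
  forall Y X, Y \in h -> X \in U -> br Y X \in U.

Definition h_irreducible (h U : {vspace V}) : Prop :=
  [/\ U != 0%VS, h_invariant h U
    & forall W : {vspace V}, (W <= U)%VS -> h_invariant h W -> W = 0%VS \/ W = U].

(* phi = (m_1,...,m_ell) is a Q-orthogonal decomposition of m into
   irreducible submodules, ordered so that m_0 = m_1 + ... + m_ell0
   with dim m_p = 1 for p <= ell0 (indices shifted to start at 0) *)
Definition is_ordered_decomposition (h : {vspace V}) (ell ell0 : nat)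
  (ms : 'I_ell -> {vspace V}) : Prop :=
  [/\ (forall i X, X \in ms i -> in_m h X),
      (forall i j, i != j -> forall X Y, X \in ms i -> Y \in ms j -> Q X Y = 0),
      (h + \sum_(i < ell) ms i)%VS = fullv,
      (forall i, h_irreducible h (ms i))
    & [/\ (ell0 <= ell)%N,
      (forall p : 'I_ell, (val p < ell0)%N -> \dim (ms p) = 1%N)
    & (forall X : V, X \in (\sum_(p < ell | (val p < ell0)%N) ms p)%VS <->
         (in_m h X /\ forall Y, Y \in h -> br Y X = 0))]].

Definition adapted_orthonormal_basis (ell : nat) (ms : 'I_ell -> {vspace V})
  (e : 'I_ell -> seq V) : Prop :=
  forall i, basis_of (ms i) (e i) /\
    (forall a b, a \in e i -> b \in e i -> Q a b = (a == b)%:R).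

Definition brk (ell : nat) (e : 'I_ell -> seq V) (i j k : 'I_ell) : R :=
  \sum_(a <- e i) \sum_(b <- e j) \sum_(c <- e k) (Q (br a b) c) ^+ 2.

Definition brsp (U W : {vspace V}) : {vspace V} :=
  <<[seq br u w | u <- vbasis U, w <- vbasis W]>>%VS.

Definition normalizer_adapted (ell ell0 : nat) (ms : 'I_ell -> {vspace V}) : Prop :=
  forall p i : 'I_ell, (val p < ell0)%N -> brsp (ms p) (ms i) != 0%VS ->
    exists j : 'I_ell, (brsp (ms p) (ms i) :&: ms j)%VS != 0%VS.

Definition h_module_iso (h U W : {vspace V}) : Prop :=
  exists f : 'End(V),
    [/\ (f @: U)%VS = W, (lker f :&: U)%VS = 0%VS
      & forall Y X, Y \in h -> X \in U -> f (br Y X) = br Y (f X)].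

End Defs.

(* Main.v *)
Require Import Defs.
From HB Require Import structures.
From mathcomp Require Import all_boot all_order all_algebra.
Import Order.TTheory GRing.Theory Num.Theory.
Local Open Scope ring_scope.
Set Implicit Arguments. Unset Strict Implicit. Unset Printing Implicit Defensive.

Section H.
Variables (R : realFieldType) (n : nat).
Local Notation V := 'rV[R]_n.
Variable br : V -> V -> V.
Hypothesis Hb : is_lie_bracket br.

Lemma br0l z : br 0 z = 0.
Proof. case: Hb => L _ _. have := L 1 0 0 z. rewrite !scale1r addr0 => /(congr1 (fun t => t - br 0 z)).
by rewrite addrK subrr => <-. Qed.
Lemma brZl a x z : br (a *: x) z = a *: br x z.
Proof. case: Hb => L _ _. by rewrite -[a *: x]addr0 L br0l addr0. Qed.
Lemma brlinr v : linear (br v).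
Proof. case: Hb => L A _ a x y /=. rewrite A L (A v x) (A v y). by rewrite scalerN opprD. Qed.
Lemma br0r z : br z 0 = 0.
Proof. case: Hb => _ A _. by rewrite A br0l oppr0. Qed.

Definition adL v : {linear V -> V} := HB.pack (br v) (GRing.isLinear.Build R V V *:%R (br v) (brlinr v)).
Definition adf v : 'End(V) := linfun (adL v).
Lemma adfE v x : adf v x = br v x.
Proof. by rewrite /adf lfunE. Qed.
Lemma brNr v w : br v (- w) = - br v w.
Proof. exact: (raddfN (adL v) w). Qed.
Lemma br_equiv Y v X : br Y v = 0 -> br Y (br v X) = br v (br Y X).
Proof.
case: Hb => _ A J => H0. have := J Y v X. rewrite H0 br0r addr0 (A X Y) brNr.
by move/eqP; rewrite subr_eq0 => /eqP.
Qed.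
End H.

Theorem lemma5p2 (R : realFieldType) (n : nat)
  (br : 'rV[R]_n -> 'rV[R]_n -> 'rV[R]_n) (Q : 'rV[R]_n -> 'rV[R]_n -> R)
  (h : {vspace 'rV[R]_n}) (ell ell0 : nat) (ms : 'I_ell -> {vspace 'rV[R]_n})
  (e : 'I_ell -> seq 'rV[R]_n) (Vp : 'I_ell -> 'rV[R]_n) :
  is_lie_bracket br ->
  is_ad_invariant_inner_product br Q ->
  is_subalgebra br h ->
  almost_effective br h ->
  is_ordered_decomposition br Q h ell0 ms ->
  adapted_orthonormal_basis Q ms e ->
  (forall p : 'I_ell, (val p < ell0)%N -> Vp p \in ms p /\ Q (Vp p) (Vp p) = 1) ->
  normalizer_adapted br ell0 ms ->
  forall p i : 'I_ell, (val p < ell0)%N ->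
  forall j : 'I_ell, 0 < brk br Q e p i j ->
    [/\ (forall k : 'I_ell, k != j -> brk br Q e p i k = 0),
        h_module_iso br h (ms i) (ms j)
      & (forall X, X \in ms i -> br (Vp p) X \in ms j) /\
        (forall Y, Y \in ms j -> exists2 X, X \in ms i & br (Vp p) X = Y)].

Proof.
move=> Hb HQ Hh Heff Hdec Hbas HVp Hna p i Hp j Hpos.
case: HQ => QL QS Qpos Qinv.
case: Hdec => Hm Horth Hsum Hirr [Hell0 Hdim Hm0].
have Q0 : forall z, Q 0 z = 0.
  move=> z; have := QL 1 0 0 z; rewrite !mul1r scale1r addr0.
  by move/(congr1 (fun t => t - Q 0 z)); rewrite addrK subrr => <-.
case: (HVp p Hp) => Vin VV.
pose v := Vp p.
have vnz : v != 0.
  by apply/eqP => v0; move: VV; rewrite -/v v0 Q0 => /eqP; rewrite eq_sym oner_eq0.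
have msp : ms p = <[v]>%VS.
  by apply/eqP; rewrite eq_sym eqEdim -memvE Vin dim_vline vnz Hdim.
have hv : forall Y, Y \in h -> br Y v = 0.
  move=> Y HY.
  have sub : (ms p <= \sum_(q < ell | (val q < ell0)%N) ms q)%VS by exact: (sumv_sup p).
  move/subvP: sub => sub.
  by have /Hm0 [_ ->] := sub _ Vin.
pose f := adf Hb v.
have fE : forall x, f x = br v x := adfE Hb v.
have equiv : forall Y X, Y \in h -> f (br Y X) = br Y (f X).
  by move=> Y X HY; rewrite !fE (@br_equiv _ _ _ Hb Y v X (hv Y HY)).
have invs : forall k, h_invariant br h (ms k) by move=> k; case: (Hirr k).
pose W := (f @: ms i)%VS.
have Winv : h_invariant br h W.
  by move=> Y X HY /memv_imgP [u Hu ->]; rewrite -equiv // memv_img // invs.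
have memb : forall k a, a \in e k -> a \in ms k.
  by move=> k a Ha; case: (Hbas k) => /span_basis <- _; exact: memv_span.
have brpW : forall a b, a \in ms p -> b \in ms i -> br a b \in W.
  move=> a b; rewrite msp => /vlineP [c ->] Hb'.
  by rewrite brZl // -fE; apply: memvZ; exact: memv_img.
have Wnz : W != 0%VS.
  apply/negP => /eqP W0; move: Hpos.
  rewrite /brk big_seq big1 ?ltxx // => a Ha; rewrite big_seq big1 // => b Hb'.
  rewrite big1 // => c _.
  have := brpW a b (memb _ _ Ha) (memb _ _ Hb'); rewrite W0 memv0 => /eqP ->.
  by rewrite Q0 expr2 mulr0.
have brspW : (brsp br (ms p) (ms i) <= W)%VS.
  apply/span_subvP => x /allpairsP [[u w] [Hu Hw ->]] /=.
  by apply: brpW; [exact: vbasis_mem Hu | exact: vbasis_mem Hw].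
have Wbrsp : (W <= brsp br (ms p) (ms i))%VS.
  rewrite /W -{1}(span_basis (vbasisP (ms i))) limg_span.
  apply/span_subvP => x /mapP [w Hw ->]; rewrite fE.
  case Eb: (vbasis (ms p) : seq _) => [|u0 s].
    have := span_basis (vbasisP (ms p)); rewrite Eb span_nil msp => /eqP.
    by rewrite eq_sym -dimv_eq0 dim_vline (negbTE vnz).
  have u0in : u0 \in (vbasis (ms p) : seq _) by rewrite Eb mem_head.
  have u0nz : u0 != 0 := free_not0 (basis_free (vbasisP (ms p))) u0in.
  have := vbasis_mem u0in; rewrite {1}msp => /vlineP [c Ec].
  have cnz : c != 0 by apply: contraNneq u0nz => c0; rewrite Ec c0 scale0r.
  have -> : br v w = c^-1 *: br u0 w by rewrite Ec brZl // scalerA mulVf // scale1r.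
  apply: memvZ; apply: memv_span; apply/allpairsP; exists (u0, w); split => //=.
have brsp_nz : brsp br (ms p) (ms i) != 0%VS.
  by apply: contra Wnz => /eqP B0; rewrite -subv0 -B0.
have [j' Hj'] := Hna p i Hp brsp_nz.
pose I := (W :&: ms j')%VS.
have Inz : I != 0%VS.
  apply: contra Hj'; rewrite -!subv0 => H; apply: subv_trans H.
  exact: capvS brspW (subvv _).
have Iinv : h_invariant br h I.
  by move=> Y X HY; rewrite !memv_cap => /andP [H1 H2]; rewrite Winv // invs.
have IE : I = ms j'.
  case: (Hirr j') => _ _ H; case: (H I (capvSr _ _) Iinv) => // I0.
  by rewrite I0 eqxx in Inz.
have msjW : (ms j' <= W)%VS by rewrite -IE capvSl.
have msj_nz : ms j' != 0%VS by case: (Hirr j').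
pose K := (lker f :&: ms i)%VS.
have Kinv : h_invariant br h K.
  move=> Y X HY; rewrite !memv_cap !memv_ker => /andP [/eqP H1 H2].
  by rewrite equiv // H1 br0r // eqxx invs.
have K0 : K = 0%VS.
  case: (Hirr i) => _ _ H; case: (H K (capvSr _ _) Kinv) => // KE.
  exfalso; have : (ms i <= lker f)%VS by rewrite -KE capvSl.
  by rewrite lkerE -/W => /eqP W0; rewrite W0 eqxx in Wnz.
pose P := (f @^-1: ms j' :&: ms i)%VS.
have Pinv : h_invariant br h P.
  move=> Y X HY; rewrite !memv_cap -!memv_preim => /andP [H1 H2].
  by rewrite equiv // !invs.
have Pnz : P != 0%VS.
  move/subvP: msjW => sub.
  have /memv_imgP [x Hx Ex] := sub _ (memv_pick (ms j')).
  apply/eqP => P0.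
  have : x \in P by rewrite memv_cap -memv_preim -Ex memv_pick Hx.
  rewrite P0 memv0 => /eqP x0; move: Ex; rewrite x0 linear0 => /eqP.
  by rewrite vpick0 (negbTE msj_nz).
have PE : P = ms i.
  case: (Hirr i) => _ _ H; case: (H P (capvSr _ _) Pinv) => // P0.
  by rewrite P0 eqxx in Pnz.
have WE : W = ms j'.
  apply/eqP; rewrite eqEsubv msjW andbT.
  apply/subvP => y /memv_imgP [x Hx ->].
  have : x \in P by rewrite PE.
  by rewrite memv_cap -memv_preim => /andP [].
have zero : forall k, k != j' -> brk br Q e p i k = 0.
  move=> k Hk; rewrite /brk big_seq big1 // => a Ha; rewrite big_seq big1 // => b Hb'.
  rewrite big_seq big1 // => c Hc.
  have Hab : br a b \in ms j' by rewrite -WE; apply: brpW; apply: memb.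
  by rewrite (Horth j' k _ _ _ Hab (memb _ _ Hc)) ?expr2 ?mulr0 // eq_sym.
have jj : j' = j.
  case: (eqVneq j' j) => // Hne.
  by move: Hpos; rewrite zero ?ltxx // eq_sym.
subst j'.
split => //.
  by exists f; split => // Y X HY _; exact: equiv.
split.
  by move=> X HX; rewrite -fE -WE; exact: memv_img.
move=> Y; rewrite -WE => /memv_imgP [x Hx ->]; by exists x.
Qed.
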